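(* Let $Y$ be an Abelian group, let $\varphi_1,\dots,\varphi_m$ and $\psi_1,\dots,\psi_n$ be functions on $Y$, let $a_1,\dots,a_m,b_1,\dots,b_m,c_1,\dots,c_n,d_1,\dots,d_n$ be integers, and let $q(u,v)$ be a continuous polynomial of degree $l$ on $Y^2$, such that $$\sum_{j=1}^m\varphi_j(a_ju+b_jv)=\sum_{j=1}^n\psi_j(c_ju+d_jv)+q(u,v),\quad u,v\in Y.$$ Then for each $j\in\{1,\dots,m\}$, for all $u,v,h,k,k_1,\dots,k_n\in Y$ and all $l_i\in Y$ ($i\in\{1,\dots,m\}\setminus\{j\}$), $$\Big[\Delta_{a_jh+b_jk}^{l+1}\prod_{i\in\{1,\dots,m\},\,i\neq j}\Delta_{(a_jb_i-b_ja_i)l_i}\prod_{s=1}^n\Delta_{(a_jd_s-b_jc_s)k_s}\varphi_j\Big](a_ju+b_jv)=0,$$ where the product denotes composition of the (commuting) difference operators. Moreover, if $q\equiv 0$, the same holds with the operator $\Delta_{a_jh+b_jk}^{l+1}$ omitted.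
   Context: For a function $f$ on an Abelian group $G$ and $h\in G$, $\Delta_hf(y)=f(y+h)-f(y)$. A function $f$ on $G$ is a polynomial if $\Delta_h^{l+1}f(y)=0$ for some $l$ and all $y,h\in G$; the minimal such $l$ is its degree. *)

(* Defs.v *)
From HB Require Import structures.
From mathcomp Require Import all_boot all_order all_algebra.
From mathcomp Require Import all_classical all_reals all_analysis.
Set Implicit Arguments. Unset Strict Implicit. Unset Printing Implicit Defensive.
Import Order.TTheory GRing.Theory Num.Theory.
Local Open Scope ring_scope.

Definition delta {G V : zmodType} (h : G) (f : G -> V) : G -> V :=
  fun y => f (y + h) - f y.

Definition delta_seq {G V : zmodType} (hs : seq G) (f : G -> V) : G -> V :=
  foldr delta f hs.

Definition is_poly_of_degree {G V : zmodType} (f : G -> V) (l : nat) : Prop :=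
  (forall y h : G, iter l.+1 (delta h) f y = 0) /\
  (forall l' : nat, (forall y h : G, iter l'.+1 (delta h) f y = 0) -> (l <= l')%N).

(* Main.v *)
Require Import Defs.
From HB Require Import structures.
From mathcomp Require Import all_boot all_order all_algebra.
From mathcomp Require Import all_classical all_reals all_analysis.
Import Order.TTheory GRing.Theory Num.Theory.
Import numFieldNormedType.Exports.
Local Open Scope ring_scope.

Section Gen.
Variables (G V : zmodType).
Implicit Types (f g : G -> V) (x y : G) (ws : seq G).

Lemma deltaC x y f : delta x (delta y f) = delta y (delta x f).
Proof.
apply: funext => z; rewrite /delta (addrAC z x y).
by rewrite !opprB !addrA [RHS]addrAC [LHS]addrAC (addrAC (f (z + y + x))).
Qed.

Lemma ds_delta x ws f : delta x (delta_seq ws f) = delta_seq ws (delta x f).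
Proof. by elim: ws => //= y ws IH; rewrite deltaC IH. Qed.

Lemma dsC A B f : delta_seq A (delta_seq B f) = delta_seq B (delta_seq A f).
Proof. by elim: A => //= x A IH; rewrite IH ds_delta. Qed.

Lemma ds_cat A B f : delta_seq (A ++ B) f = delta_seq A (delta_seq B f).
Proof. by rewrite /delta_seq foldr_cat. Qed.

Lemma delta0 x : delta x (fun _ : G => (0 : V)) = (fun _ => 0).
Proof. by apply: funext => z; rewrite /delta subrr. Qed.

Lemma ds0 ws : delta_seq ws (fun _ : G => (0 : V)) = (fun _ => 0).
Proof. by elim: ws => //= x ws ->; rewrite delta0. Qed.

Lemma ds_kill ws x f : x \in ws -> delta x f = (fun _ => 0) ->
  delta_seq ws f = (fun _ => 0).
Proof.
move=> + H; elim: ws => //= y ws IH; rewrite in_cons => /orP [/eqP <-|/IH ->].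
  by rewrite ds_delta H ds0.
by rewrite delta0.
Qed.

Lemma iter_ds n x f : iter n (delta x) f = delta_seq (nseq n x) f.
Proof. by elim: n => //= n ->. Qed.

Lemma delta_sum (I : Type) (r : seq I) (F : I -> G -> V) x :
  delta x (fun y => \sum_(i <- r) F i y) = fun y => \sum_(i <- r) delta x (F i) y.
Proof. by apply: funext => z; rewrite /delta -sumrB. Qed.

Lemma ds_sum (I : Type) (r : seq I) (F : I -> G -> V) ws :
  delta_seq ws (fun y => \sum_(i <- r) F i y) =
  fun y => \sum_(i <- r) delta_seq ws (F i) y.
Proof. by elim: ws => //= x ws ->; rewrite delta_sum. Qed.

Lemma delta_add x f g :
  delta x (fun y => f y + g y) = fun y => delta x f y + delta x g y.
Proof. by apply: funext => z; rewrite /delta opprD addrACA. Qed.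

Lemma ds_add ws f g :
  delta_seq ws (fun y => f y + g y) = fun y => delta_seq ws f y + delta_seq ws g y.
Proof. by elim: ws => //= x ws ->; rewrite delta_add. Qed.

Variable (H : zmodType).
Lemma ds_comp (L : G -> H) (hL : forall x y, L (x + y) = L x + L y)
  (f : H -> V) ws :
  delta_seq ws (fun y => f (L y)) = fun y => delta_seq (map L ws) f (L y).
Proof.
elim: ws => //= x ws ->; apply: funext => z; by rewrite /delta hL.
Qed.

Lemma delta_comp_kill (L : G -> H) (hL : forall x y, L (x + y) = L x + L y)
  (f : H -> V) x : L x = 0 -> delta x (fun y => f (L y)) = fun _ => 0.
Proof. by move=> Lx; apply: funext => z; rewrite /delta hL Lx addr0 subrr. Qed.

End Gen.

Theorem lemma4 (Y : topologicalZmodType) (C : numFieldType) (m n l : nat)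
  (phi : 'I_m -> Y -> C) (psi : 'I_n -> Y -> C)
  (a b : 'I_m -> int) (c d : 'I_n -> int) (q : Y * Y -> C) :
  continuous q ->
  is_poly_of_degree q l ->
  (forall u v : Y,
     \sum_(j < m) phi j (u *~ a j + v *~ b j)
     = \sum_(j < n) psi j (u *~ c j + v *~ d j) + q (u, v)) ->
  (forall (j : 'I_m) (u v h k : Y) (ls : 'I_m -> Y) (ks : 'I_n -> Y),
     iter l.+1 (delta (h *~ a j + k *~ b j))
       (delta_seq [seq ls i *~ (a j * b i - b j * a i) | i <- enum 'I_m & i != j]
         (delta_seq [seq ks s *~ (a j * d s - b j * c s) | s <- enum 'I_n]
            (phi j)))
       (u *~ a j + v *~ b j) = 0)
  /\
  ((forall w, q w = 0) ->
   forall (j : 'I_m) (u v : Y) (ls : 'I_m -> Y) (ks : 'I_n -> Y),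
     delta_seq [seq ls i *~ (a j * b i - b j * a i) | i <- enum 'I_m & i != j]
       (delta_seq [seq ks s *~ (a j * d s - b j * c s) | s <- enum 'I_n]
          (phi j))
       (u *~ a j + v *~ b j) = 0).
Proof.
move=> _ [qpoly _] E.
pose L (x y : int) (w : Y * Y) := w.1 *~ x + w.2 *~ y.
have hL x y : forall w1 w2, L x y (w1 + w2) = L x y w1 + L x y w2.
  by move=> w1 w2; rewrite /L /= !mulrzDl addrACA.
have EF : (fun w : Y * Y => \sum_(i < m) phi i (L (a i) (b i) w)) =
          (fun w => \sum_(s < n) psi s (L (c s) (d s) w) + q w).
  by apply: funext => -[u v]; rewrite E.
have core : forall (P : seq (Y * Y)), delta_seq P q = (fun _ => 0) ->
  forall (j : 'I_m) (u v : Y) (ls : 'I_m -> Y) (ks : 'I_n -> Y),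
  delta_seq (map (L (a j) (b j)) P)
     (delta_seq [seq ls i *~ (a j * b i - b j * a i) | i <- enum 'I_m & i != j]
       (delta_seq [seq ks s *~ (a j * d s - b j * c s) | s <- enum 'I_n]
          (phi j))) (u *~ a j + v *~ b j) = 0.
  move=> P HP j u v ls ks.
  pose Ls := [seq (ls i *~ b i, - (ls i *~ a i)) | i <- enum 'I_m & i != j].
  pose Ks := [seq (ks s *~ d s, - (ks s *~ c s)) | s <- enum 'I_n].
  pose W := P ++ Ls ++ Ks.
  have Heq : delta_seq (map (L (a j) (b j)) W) (phi j) =
    delta_seq (map (L (a j) (b j)) P)
     (delta_seq [seq ls i *~ (a j * b i - b j * a i) | i <- enum 'I_m & i != j]
       (delta_seq [seq ks s *~ (a j * d s - b j * c s) | s <- enum 'I_n]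
          (phi j))).
    rewrite /W !map_cat !ds_cat /Ls /Ks -!map_comp.
    congr (delta_seq _ (delta_seq _ (delta_seq _ _))).
      apply: eq_map => i /=.
      by rewrite /L /= mulNrz -!mulrzA mulrzBr (mulrC (b i)) (mulrC (a i)).
    apply: eq_map => s /=.
    by rewrite /L /= mulNrz -!mulrzA mulrzBr (mulrC (d s)) (mulrC (c s)).
  rewrite -Heq.
  change (u *~ a j + v *~ b j) with (L (a j) (b j) (u, v)).
  have := congr1 (fun F => delta_seq W F (u, v)) EF.
  rewrite ds_add !ds_sum.
  have -> : delta_seq W q = (fun _ => 0).
    by rewrite /W ds_cat dsC HP ds0.
  move=> EQ; rewrite (bigD1 j) // in EQ.
  rewrite [X in _ = X + _]big1 ?add0r in EQ; last first.
    move=> s _; rewrite (@ds_kill _ _ _ (ks s *~ d s, - (ks s *~ c s))) //.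
      by rewrite /W !mem_cat; apply/orP; right; apply/orP; right;
        apply: map_f; rewrite mem_enum.
    apply: delta_comp_kill => //.
    by rewrite /L /= mulNrz -!mulrzA (mulrC (d s)) subrr.
  rewrite [X in _ + X = _]big1 ?addr0 in EQ; last first.
    move=> i ij; rewrite (@ds_kill _ _ _ (ls i *~ b i, - (ls i *~ a i))) //.
      rewrite /W !mem_cat; apply/orP; right; apply/orP; left.
      by apply: map_f; rewrite mem_filter mem_enum andbT.
    apply: delta_comp_kill => //.
    by rewrite /L /= mulNrz -!mulrzA (mulrC (b i)) subrr.
  by move: EQ; rewrite (@ds_comp _ _ _ _ (hL (a j) (b j))).
split.
  move=> j u v h k ls ks.
  have := core (nseq l.+1 (h, k)) _ j u v ls ks.
  rewrite iter_ds map_nseq; apply.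
  by rewrite -iter_ds; apply: funext => w; apply: qpoly.
move=> q0 j u v ls ks.
by apply: (core [::]) => //=; apply: funext.
Qed.
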